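(* Let $G=(U,V,E)$ be a path-restricted ordered bipartite graph, let $P$ be a forward path in $G$, and let $w$ be a vertex of $G$ not on $P$. Then at most one edge of $G$ joins $w$ to a vertex of $P$.
   Context: An ordered bipartite graph is $G=(U,V,E)$ where $U,V$ are disjoint finite sets, each carrying a strict total order (both written $<$), and $E\subseteq U\times V$. A path is a sequence of edges in which consecutive edges share a vertex. A path visiting the vertices of $U$ in the order $u_1,\dots,u_k$ and those of $V$ in the order $v_1,\dots,v_l$ is a forward path if either $u_1<\dots<u_k$ and $v_1<\dots<v_l$, or $u_1>\dots>u_k$ and $v_1>\dots>v_l$. For $x\le y$ in $U$ write $\langle x,y\rangle=\{u\in U: x\le u\le y\}$, and similarly in $V$. If $u_a<u_b$ are the smallest and largest $U$-vertices and $v_c<v_d$ the smallest and largest $V$-vertices of a forward path $P$, the range of $P$ is $\{\langle u_a,u_b\rangle,\langle v_c,v_d\rangle\}$. A vertex of $P$ is non-terminal if it is adjacent along $P$ to two vertices of $P$. An edge is a back edge to $P$ if either it is $(u_a,v_j)$ with $v_j\in\langle v_c,v_d\rangle$ and $v_j>v'$ for some non-terminal vertex $v'\in V$ of $P$, or it is $(u_i,v_c)$ with $u_i\in\langle u_a,u_b\rangle$ and $u_i>u'$ for some non-terminal vertex $u'\in U$ of $P$. $G$ is a path-restricted ordered bipartite graph (PRBG) if no forward path in $G$ has a back edge in $E$. *)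

(* Defs.v *)
From mathcomp Require Import all_boot all_order.
Set Implicit Arguments. Unset Strict Implicit. Unset Printing Implicit Defensive.
Import Order.TTheory.
Local Open Scope order_scope.

(* Ordered bipartite graph G = (U, V, E): U, V finite sets with strict total
   orders (finOrderType), E : {set U * V}.  Vertices of G are elements of U + V. *)
Section OBG.
Variables (dU dV : Order.disp_t) (U : finOrderType dU) (V : finOrderType dV).
Variable E : {set U * V}.

Definition adj (x y : U + V) : bool :=
  match x, y with
  | inl u, inr v => (u, v) \in E
  | inr v, inl u => (u, v) \in E
  | _, _ => false
  end.

Definition is_path (p : seq (U + V)) : bool :=
  match p with
  | x :: q => [&& 0 < size q, path adj x q & uniq p]
  | [::] => false
  end.

Definition Uvs (p : seq (U + V)) : seq U :=
  pmap (fun x => if x is inl u then Some u else None) p.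
Definition Vvs (p : seq (U + V)) : seq V :=
  pmap (fun x => if x is inr v then Some v else None) p.

Definition forward_path (p : seq (U + V)) : bool :=
  is_path p &&
  ((sorted <%O (Uvs p) && sorted <%O (Vvs p)) ||
   (sorted >%O (Uvs p) && sorted >%O (Vvs p))).

(* non-terminal vertices: those adjacent along p to two vertices of p,
   i.e. all vertices except the first and the last *)
Definition nonterminal (p : seq (U + V)) : seq (U + V) :=
  drop 1 (take (size p).-1 p).

Definition is_min {d} {T : orderType d} (s : seq T) (x : T) : bool :=
  (x \in s) && all (fun y => x <= y) s.
Definition is_max {d} {T : orderType d} (s : seq T) (x : T) : bool :=
  (x \in s) && all (fun y => y <= x) s.

(* (u, v) is a back edge to p; range of p is {<u_a,u_b>, <v_c,v_d>} *)
Definition back_edge (p : seq (U + V)) (u : U) (v : V) : Prop :=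
  (is_min (Uvs p) u /\
   (exists vc vd, [/\ is_min (Vvs p) vc, is_max (Vvs p) vd & vc <= v <= vd]) /\
   (exists v', inr v' \in nonterminal p /\ v' < v))
  \/
  (is_min (Vvs p) v /\
   (exists ua ub, [/\ is_min (Uvs p) ua, is_max (Uvs p) ub & ua <= u <= ub]) /\
   (exists u', inl u' \in nonterminal p /\ u' < u)).

Definition PRBG : Prop :=
  forall p u v, forward_path p -> (u, v) \in E -> ~ back_edge p u v.

End OBG.

(* Main.v *)
Require Import Defs.
From mathcomp Require Import all_boot all_order.
Set Implicit Arguments. Unset Strict Implicit. Unset Printing Implicit Defensive.
Import Order.TTheory.
Local Open Scope order_scope.


Section S.
Variables (dU dV : Order.disp_t) (U : finOrderType dU) (V : finOrderType dV).
Variable E : {set U * V}.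
Local Notation adj := (adj E).
Implicit Types (s t : seq (U + V)) (z : U + V).

Lemma adjC a b : adj a b = adj b a.
Proof. by case: a; case: b. Qed.

Lemma Uvs_cat s t : Uvs (s ++ t) = Uvs s ++ Uvs t.
Proof. exact: pmap_cat. Qed.
Lemma Vvs_cat s t : Vvs (s ++ t) = Vvs s ++ Vvs t.
Proof. exact: pmap_cat. Qed.
Lemma Uvs_rcons s z : Uvs (rcons s z) = Uvs s ++ Uvs [:: z].
Proof. by rewrite -cats1 Uvs_cat. Qed.
Lemma Vvs_rcons s z : Vvs (rcons s z) = Vvs s ++ Vvs [:: z].
Proof. by rewrite -cats1 Vvs_cat. Qed.
Lemma Uvs_rev s : Uvs (rev s) = rev (Uvs s).
Proof.
elim: s => // z s IH; rewrite rev_cons Uvs_rcons IH.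
by case: z => [u|v] /=; rewrite ?cats1 ?cats0 ?rev_cons.
Qed.
Lemma Vvs_rev s : Vvs (rev s) = rev (Vvs s).
Proof.
elim: s => // z s IH; rewrite rev_cons Vvs_rcons IH.
by case: z => [u|v] /=; rewrite ?cats1 ?cats0 ?rev_cons.
Qed.

Lemma nt1 (a b : U + V) s : s != [::] -> b \in nonterminal (a :: b :: s).
Proof. by case: s => // c s _; rewrite /nonterminal /= inE eqxx. Qed.
Lemma nt2 (a b c : U + V) s : s != [::] -> c \in nonterminal (a :: b :: c :: s).
Proof. by case: s => // d s _; rewrite /nonterminal /= !inE eqxx orbT. Qed.

Lemma rcons_nnil (T : eqType) (s : seq T) (z : T) : rcons s z != [::].
Proof. by case: s. Qed.

Lemma path_suffix (T : Type) (e : rel T) (h : T) (t A : seq T) (x : T) (R : seq T) :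
  path e h t -> h :: t = A ++ x :: R -> path e x R.
Proof.
move=> hp; case: A => [|a A] /= [eh et]; first by rewrite -eh -et.
by move: hp; rewrite et cat_path /= => /andP[_ /andP[_ ->]].
Qed.
End S.

Section Ord.
Variables (d : Order.disp_t) (T : orderType d).
Lemma sorted_head (a : T) s : sorted <%O (a :: s) -> all (fun y => a < y) s.
Proof. exact: order_path_min lt_trans. Qed.
Lemma gt_trans' : transitive (>%O : rel T).
Proof. by move=> a b c /= h1 h2; apply: lt_trans h2 h1. Qed.
Lemma sorted_last (a : T) s : sorted <%O (rcons s a) -> all (fun y => y < a) s.
Proof.
rewrite -rev_sorted rev_rcons => /(order_path_min gt_trans').
by rewrite all_rev.
Qed.
Lemma is_min_rev (s : seq T) x : is_min (rev s) x = is_min s x.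
Proof. by rewrite /is_min mem_rev all_rev. Qed.
Lemma sorted_gt_rev (s : seq T) : sorted >%O (rev s) = sorted <%O s.
Proof. by rewrite rev_sorted. Qed.
End Ord.

Section Ord2.
Variables (d : Order.disp_t) (T : orderType d).
Lemma is_min_head (a : T) s : sorted <%O (a :: s) -> is_min (a :: s) a.
Proof.
move=> /sorted_head h; rewrite /is_min mem_head /= lexx /=.
by apply/allP => v /(allP h) /ltW.
Qed.
Lemma is_max_last (a : T) s : sorted <%O (rcons s a) -> is_max (rcons s a) a.
Proof.
move=> /sorted_last h; rewrite /is_max mem_rcons mem_head all_rcons lexx andTb.
by apply/allP => v /(allP h) /ltW.
Qed.
End Ord2.

Section CasesU.
Variables (dU dV : Order.disp_t) (U : finOrderType dU) (V : finOrderType dV).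
Variable E : {set U * V}.
Hypothesis HP : PRBG E.

Lemma case1U (w : U) (x y : V) (B : seq (U + V)) :
  path (adj E) (inr x) (rcons B (inr y)) -> uniq (inr x :: rcons B (inr y)) ->
  inl w \notin B -> sorted <%O (Uvs B) -> sorted <%O (x :: rcons (Vvs B) y) ->
  (w, x) \in E -> (w, y) \in E -> all (fun u => w < u) (Uvs B) -> False.
Proof.
move=> hpath huniq hw hsU hsV ewx ewy hall.
set Q := inl w :: inr x :: rcons B (inr y).
have UQ : Uvs Q = w :: Uvs B by rewrite /Q /= Uvs_rcons cats0.
have VQ : Vvs Q = x :: rcons (Vvs B) y by rewrite /Q /= Vvs_rcons cats1.
have fQ : forward_path E Q.
  rewrite /forward_path UQ VQ hsV /=.
  rewrite (path_sortedE lt_trans) hall hsU /=.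
  move: huniq => /= /andP[-> ->]; rewrite ewx hpath /= andbT.
  by rewrite inE negb_or mem_rcons inE /= hw.
have [hminV hmaxV] : all (fun v => x < v) (rcons (Vvs B) y) /\
                      all (fun v => v < y) (x :: Vvs B).
  split; first exact: sorted_head.
  by apply: sorted_last; rewrite rcons_cons.
have xy : x < y by move: hminV; rewrite all_rcons => /andP[].
apply: (HP fQ ewy); left; split.
  rewrite /is_min UQ mem_head /= lexx /=.
  by apply/allP => u /(allP hall) /ltW.
split.
  exists x, y; split => //.
  - rewrite /is_min VQ mem_head /= lexx /=.
    by apply/allP => v /(allP hminV) /ltW.
  - rewrite /is_max VQ -rcons_cons mem_rcons mem_head all_rcons lexx andTb.
    by apply/allP => v /(allP hmaxV) /ltW.
  - by rewrite (ltW xy) lexx.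
exists x; split => //; rewrite /Q; apply: nt1; exact: rcons_nnil.
Qed.
End CasesU.

Section Cases2U.
Variables (dU dV : Order.disp_t) (U : finOrderType dU) (V : finOrderType dV).
Variable E : {set U * V}.
Hypothesis HP : PRBG E.

Lemma case2U (w : U) (x y : V) (B B0 : seq (U + V)) (um u1 : U) :
  path (adj E) (inr x) (rcons B (inr y)) -> uniq (inr x :: rcons B (inr y)) ->
  inl w \notin B -> sorted <%O (Uvs B) -> sorted <%O (x :: rcons (Vvs B) y) ->
  (w, x) \in E -> (w, y) \in E -> B = rcons B0 (inl um) -> is_min (Uvs B) u1 ->
  all (fun u => u < w) (Uvs B) -> False.
Proof.
move=> hpath huniq hw hsU hsV ewx ewy hB hmin hall.
set Q := inl w :: inr y :: rcons (rev B) (inr x).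
have UQ : Uvs Q = w :: rev (Uvs B) by rewrite /Q /= Uvs_rcons cats0 Uvs_rev.
have VQ : Vvs Q = y :: rcons (rev (Vvs B)) x by rewrite /Q /= Vvs_rcons Vvs_rev cats1.
have VSrev : rev (x :: rcons (Vvs B) y) = y :: rcons (rev (Vvs B)) x
  by rewrite rev_cons rev_rcons.
have Srev : rev (inr x :: rcons B (inr y)) = inr y :: rcons (rev B) (inr x)
  by rewrite rev_cons rev_rcons.
have fQ : forward_path E Q.
  rewrite /forward_path; apply/andP; split; last first.
    apply/orP; right; rewrite UQ VQ -VSrev sorted_gt_rev hsV andbT /=.
    rewrite (path_sortedE (@gt_trans' _ _)) sorted_gt_rev hsU andbT all_rev.
    exact: hall.
  have uQ : uniq (inr y :: rcons (rev B) (inr x)) by rewrite -Srev rev_uniq.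
  rewrite /is_path /Q /=; move: uQ => /= /andP[-> ->]; rewrite ewy /= !andbT.
  have := rev_path (adj E) (inr x) (rcons B (inr y)).
  rewrite last_rcons belast_rcons rev_cons => ->.
  rewrite (@eq_path _ _ (adj E)) ?hpath; last by move=> a b; rewrite adjC.
  by rewrite /= inE negb_or mem_rcons inE /= mem_rev hw.
have hS := is_min_head hsV.
have xy : x < y.
  by move: (sorted_head hsV); rewrite all_rcons => /andP[].
have hum : um < w by apply: (allP hall); rewrite hB Uvs_rcons mem_cat mem_head orbT.
have u1in : u1 \in Uvs B by case/andP: hmin.
have u1w : u1 < w by apply: (allP hall).
apply: (HP fQ ewx); right; split.
  by rewrite VQ -VSrev is_min_rev.
split.
  exists u1, w; split => //.
  - rewrite /is_min UQ inE mem_rev u1in orbT /= (ltW u1w) /= all_rev.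
    by case/andP: hmin.
  - rewrite /is_max UQ mem_head /= lexx /= all_rev.
    by apply/allP => v /(allP hall) /ltW.
  - by rewrite (ltW u1w) lexx.
exists um; split => //; rewrite /Q hB rev_rcons /=; apply: nt2; exact: rcons_nnil.
Qed.
End Cases2U.

Section Cases3U.
Variables (dU dV : Order.disp_t) (U : finOrderType dU) (V : finOrderType dV).
Variable E : {set U * V}.
Hypothesis HP : PRBG E.

Lemma case3U (w u1 um : U) (x y v1 : V) :
  (u1, x) \in E -> (w, x) \in E -> (w, y) \in E -> (um, y) \in E -> (u1, v1) \in E ->
  u1 < w -> w < um -> x < v1 -> v1 <= y -> False.
Proof.
move=> e1 e2 e3 e4 e5 h1 h2 h3 h4.
have xy : x < y by apply: lt_le_trans h3 h4.
have h12 : u1 < um by apply: lt_trans h1 h2.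
set Q : seq (U + V) := [:: inl u1; inr x; inl w; inr y; inl um].
have fQ : forward_path E Q.
  rewrite /forward_path /is_path /Q /= e1 e2 e3 e4 h1 h2 xy /= !inE /=.
  rewrite !(inj_eq inl_inj) (inj_eq inr_inj).
  by rewrite (lt_eqF h1) (lt_eqF h12) (lt_eqF h2) (lt_eqF xy).
apply: (HP fQ e5); left; split.
  by rewrite /is_min /= inE eqxx /= lexx (ltW h1) (ltW h12).
split.
  exists x, y; split.
  - by rewrite /is_min /= inE eqxx /= lexx (ltW xy).
  - by rewrite /is_max /= !inE eqxx orbT /= lexx (ltW xy).
  - by rewrite (ltW h3) h4.
by exists x; split => //; rewrite /Q; apply: nt1.
Qed.
End Cases3U.

Lemma two_split (T : eqType) (a : pred T) (s : seq T) : 1 < count a s ->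
  exists s1 x s2 y s3, s = s1 ++ x :: s2 ++ y :: s3 /\ a x /\ a y.
Proof.
elim: s => [//|z s IH] /=.
case az: (a z) => /= h.
  have : has a s by rewrite has_count.
  case/hasP => y ys ay; case/splitPr: ys => s2 s3.
  by exists [::], z, s2, y, s3.
have [s1 [x [s2 [y [s3 [-> [ax ay]]]]]]] := IH h.
by exists (z :: s1), x, s2, y, s3.
Qed.

Lemma seq_lastcase (T : Type) (s : seq T) : s = [::] \/ exists B z, s = rcons B z.
Proof. by case/lastP: s => [|B z]; [left | right; exists B, z]. Qed.

Section MainU.
Variables (dU dV : Order.disp_t) (U : finOrderType dU) (V : finOrderType dV).
Variable E : {set U * V}.
Hypothesis HP : PRBG E.

Lemma mainU (P : seq (U + V)) (w : U) : is_path E P -> sorted <%O (Uvs P) ->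
  sorted <%O (Vvs P) -> inl w \notin P -> 1 < count (adj E (inl w)) P -> False.
Proof.
move=> hp hsU hsV hw /two_split [s1 [x [s2 [y [s3 [hP [ax ay]]]]]]].
case: x ax hP => [//|x] ex hP; case: y ay hP => [//|y] ey hP.
have eP : P = s1 ++ (inr x :: rcons s2 (inr y)) ++ s3 by rewrite hP cat_cons cat_rcons.
have [hpath huniq] : path (adj E) (inr x) (rcons s2 (inr y)) /\
                     uniq (inr x :: rcons s2 (inr y)).
  move: hp; case hPe: P => [//|h t] /and3P[_ hpt hu]; split.
    have ht : h :: t = s1 ++ inr x :: (rcons s2 (inr y) ++ s3) by rewrite -hPe eP.
    by have := path_suffix hpt ht; rewrite cat_path => /andP[].
  by move: hu; rewrite -hPe eP cat_uniq => /and3P[_ _]; rewrite cat_uniq => /and3P[].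
have inP z : z \in s2 -> z \in P by move=> zs; rewrite hP mem_cat inE mem_cat zs !orbT.
have hw2 : inl w \notin s2 by apply/negP => /inP; apply/negP.
have hsU2 : sorted <%O (Uvs s2).
  move: hsU; rewrite eP !Uvs_cat => /cat_sorted2 [_ /cat_sorted2 [+ _]].
  by rewrite /= Uvs_rcons cats0.
have hsV2 : sorted <%O (x :: rcons (Vvs s2) y).
  move: hsV; rewrite eP !Vvs_cat => /cat_sorted2 [_ /cat_sorted2 [+ _]].
  by rewrite /= Vvs_rcons cats1.
have ewx : (w, x) \in E by [].
have ewy : (w, y) \in E by [].
have [B0 [um hB]] : exists B0 um, s2 = rcons B0 (inl um).
  case: (seq_lastcase s2) => [e | [B0 [z e]]]; move: hpath; rewrite e //=.
  rewrite rcons_path last_rcons => /andP[_]; case: z e => [um e _|//].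
  by exists B0, um.
have [B1 [u1 hB']] : exists B1 u1, s2 = inl u1 :: B1.
  move: hpath; case: s2 {hP eP inP hw2 hsU2 hsV2 B0 um hB huniq} => [|z B1] //=.
  by case: z => [u1 _|//]; exists B1, u1.
have eum : (um, y) \in E by move: hpath; rewrite hB rcons_path last_rcons => /andP[].
have eu1 : (u1, x) \in E by move: hpath; rewrite hB' /= => /andP[].
have hmin : is_min (Uvs s2) u1 by rewrite hB' /=; apply: is_min_head; rewrite -/(Uvs _) -[_ :: _]/(Uvs (inl u1 :: B1)) -hB'.
have hmax : is_max (Uvs s2) um.
  have e : Uvs s2 = rcons (Uvs B0) um by rewrite hB Uvs_rcons cats1.
  by rewrite e; apply: is_max_last; rewrite -e.
have nu1 : w != u1.
  apply/eqP => e; move/negP: hw2; apply; by rewrite hB' e mem_head.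
have num : w != um.
  apply/eqP => e; move/negP: hw2; apply; by rewrite hB e mem_rcons mem_head.
case: (ltgtP w u1) => [wu1 | u1w | e]; last by rewrite e eqxx in nu1.
  apply: (case1U HP hpath huniq hw2 hsU2 hsV2 ewx ewy).
  case/andP: hmin => _ /allP h; apply/allP => u /h; exact: lt_le_trans.
case: (ltgtP w um) => [wum | umw | e]; last by rewrite e eqxx in num.
  case: B1 hB' => [|z B2] hB'.
    case/andP: hmax => + _; rewrite hB' /= inE => /eqP eu.
    by move: (lt_trans u1w wum); rewrite eu ltxx.
  have [v1 hz] : exists v1, z = inr v1.
    by move: hpath; rewrite hB' /= => /and3P[_ + _]; case: z {hB'} => [//|v1 _]; exists v1.
  have e5 : (u1, v1) \in E by move: hpath; rewrite hB' hz /= => /and3P[].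
  have v1in : v1 \in Vvs s2 by rewrite hB' hz /= mem_head.
  have h3 : x < v1.
    by apply: (allP (sorted_head hsV2)); rewrite mem_rcons inE v1in orbT.
  have h4 : v1 < y.
    by apply: (allP (sorted_last (hsV2 : sorted <%O (rcons (x :: Vvs s2) y)))); rewrite inE v1in orbT.
  exact: (case3U HP eu1 ewx ewy eum e5 u1w wum h3 (ltW h4)).
apply: (case2U HP hpath huniq hw2 hsU2 hsV2 ewx ewy hB hmin).
case/andP: hmax => _ /allP h; apply/allP => u /h ule; exact: le_lt_trans ule umw.
Qed.
End MainU.

Section CasesV.
Variables (dU dV : Order.disp_t) (U : finOrderType dU) (V : finOrderType dV).
Variable E : {set U * V}.
Hypothesis HP : PRBG E.

Lemma case1V (w : V) (x y : U) (B : seq (U + V)) :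
  path (adj E) (inl x) (rcons B (inl y)) -> uniq (inl x :: rcons B (inl y)) ->
  inr w \notin B -> sorted <%O (Vvs B) -> sorted <%O (x :: rcons (Uvs B) y) ->
  (x, w) \in E -> (y, w) \in E -> all (fun u => w < u) (Vvs B) -> False.
Proof.
move=> hpath huniq hw hsU hsV ewx ewy hall.
set Q := inr w :: inl x :: rcons B (inl y).
have UQ : Vvs Q = w :: Vvs B by rewrite /Q /= Vvs_rcons cats0.
have VQ : Uvs Q = x :: rcons (Uvs B) y by rewrite /Q /= Uvs_rcons cats1.
have fQ : forward_path E Q.
  rewrite /forward_path UQ VQ hsV /=.
  rewrite (path_sortedE lt_trans) hall hsU /=.
  move: huniq => /= /andP[-> ->]; rewrite ewx hpath /= andbT.
  by rewrite inE negb_or mem_rcons inE /= hw.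
have [hminV hmaxV] : all (fun v => x < v) (rcons (Uvs B) y) /\
                      all (fun v => v < y) (x :: Uvs B).
  split; first exact: sorted_head.
  by apply: sorted_last; rewrite rcons_cons.
have xy : x < y by move: hminV; rewrite all_rcons => /andP[].
apply: (HP fQ ewy); right; split.
  rewrite /is_min UQ mem_head /= lexx /=.
  by apply/allP => u /(allP hall) /ltW.
split.
  exists x, y; split => //.
  - rewrite /is_min VQ mem_head /= lexx /=.
    by apply/allP => v /(allP hminV) /ltW.
  - rewrite /is_max VQ -rcons_cons mem_rcons mem_head all_rcons lexx andTb.
    by apply/allP => v /(allP hmaxV) /ltW.
  - by rewrite (ltW xy) lexx.
exists x; split => //; rewrite /Q; apply: nt1; exact: rcons_nnil.
Qed.
End CasesV.

Section Cases2V.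
Variables (dU dV : Order.disp_t) (U : finOrderType dU) (V : finOrderType dV).
Variable E : {set U * V}.
Hypothesis HP : PRBG E.

Lemma case2V (w : V) (x y : U) (B B0 : seq (U + V)) (um u1 : V) :
  path (adj E) (inl x) (rcons B (inl y)) -> uniq (inl x :: rcons B (inl y)) ->
  inr w \notin B -> sorted <%O (Vvs B) -> sorted <%O (x :: rcons (Uvs B) y) ->
  (x, w) \in E -> (y, w) \in E -> B = rcons B0 (inr um) -> is_min (Vvs B) u1 ->
  all (fun u => u < w) (Vvs B) -> False.
Proof.
move=> hpath huniq hw hsU hsV ewx ewy hB hmin hall.
set Q := inr w :: inl y :: rcons (rev B) (inl x).
have UQ : Vvs Q = w :: rev (Vvs B) by rewrite /Q /= Vvs_rcons cats0 Vvs_rev.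
have VQ : Uvs Q = y :: rcons (rev (Uvs B)) x by rewrite /Q /= Uvs_rcons Uvs_rev cats1.
have VSrev : rev (x :: rcons (Uvs B) y) = y :: rcons (rev (Uvs B)) x
  by rewrite rev_cons rev_rcons.
have Srev : rev (inl x :: rcons B (inl y)) = inl y :: rcons (rev B) (inl x)
  by rewrite rev_cons rev_rcons.
have fQ : forward_path E Q.
  rewrite /forward_path; apply/andP; split; last first.
    apply/orP; right; rewrite UQ VQ -VSrev sorted_gt_rev hsV andTb /=.
    rewrite (path_sortedE (@gt_trans' _ _)) sorted_gt_rev hsU andbT all_rev.
    exact: hall.
  have uQ : uniq (inl y :: rcons (rev B) (inl x)) by rewrite -Srev rev_uniq.
  rewrite /is_path /Q /=; move: uQ => /= /andP[-> ->]; rewrite ewy /= !andbT.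
  have := rev_path (adj E) (inl x) (rcons B (inl y)).
  rewrite last_rcons belast_rcons rev_cons => ->.
  rewrite (@eq_path _ _ (adj E)) ?hpath; last by move=> a b; rewrite adjC.
  by rewrite /= inE negb_or mem_rcons inE /= mem_rev hw.
have hS := is_min_head hsV.
have xy : x < y.
  by move: (sorted_head hsV); rewrite all_rcons => /andP[].
have hum : um < w by apply: (allP hall); rewrite hB Vvs_rcons mem_cat mem_head orbT.
have u1in : u1 \in Vvs B by case/andP: hmin.
have u1w : u1 < w by apply: (allP hall).
apply: (HP fQ ewx); left; split.
  by rewrite VQ -VSrev is_min_rev.
split.
  exists u1, w; split => //.
  - rewrite /is_min UQ inE mem_rev u1in orbT /= (ltW u1w) /= all_rev.
    by case/andP: hmin.
  - rewrite /is_max UQ mem_head /= lexx /= all_rev.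
    by apply/allP => v /(allP hall) /ltW.
  - by rewrite (ltW u1w) lexx.
exists um; split => //; rewrite /Q hB rev_rcons /=; apply: nt2; exact: rcons_nnil.
Qed.
End Cases2V.

Section Cases3V.
Variables (dU dV : Order.disp_t) (U : finOrderType dU) (V : finOrderType dV).
Variable E : {set U * V}.
Hypothesis HP : PRBG E.

Lemma case3V (w u1 um : V) (x y v1 : U) :
  (x, u1) \in E -> (x, w) \in E -> (y, w) \in E -> (y, um) \in E -> (v1, u1) \in E ->
  u1 < w -> w < um -> x < v1 -> v1 <= y -> False.
Proof.
move=> e1 e2 e3 e4 e5 h1 h2 h3 h4.
have xy : x < y by apply: lt_le_trans h3 h4.
have h12 : u1 < um by apply: lt_trans h1 h2.
set Q : seq (U + V) := [:: inr u1; inl x; inr w; inl y; inr um].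
have fQ : forward_path E Q.
  rewrite /forward_path /is_path /Q /= e1 e2 e3 e4 h1 h2 xy /= !inE /=.
  rewrite !(inj_eq inr_inj) (inj_eq inl_inj).
  by rewrite (lt_eqF h1) (lt_eqF h12) (lt_eqF h2) (lt_eqF xy).
apply: (HP fQ e5); right; split.
  by rewrite /is_min /= inE eqxx /= lexx (ltW h1) (ltW h12).
split.
  exists x, y; split.
  - by rewrite /is_min /= inE eqxx /= lexx (ltW xy).
  - by rewrite /is_max /= !inE eqxx orbT /= lexx (ltW xy).
  - by rewrite (ltW h3) h4.
by exists x; split => //; rewrite /Q; apply: nt1.
Qed.
End Cases3V.

Section MainV.
Variables (dU dV : Order.disp_t) (U : finOrderType dU) (V : finOrderType dV).
Variable E : {set U * V}.
Hypothesis HP : PRBG E.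

Lemma mainV (P : seq (U + V)) (w : V) : is_path E P -> sorted <%O (Vvs P) ->
  sorted <%O (Uvs P) -> inr w \notin P -> 1 < count (adj E (inr w)) P -> False.
Proof.
move=> hp hsU hsV hw /two_split [s1 [x [s2 [y [s3 [hP [ax ay]]]]]]].
case: x ax hP => [x|//] ex hP; case: y ay hP => [y|//] ey hP.
have eP : P = s1 ++ (inl x :: rcons s2 (inl y)) ++ s3 by rewrite hP cat_cons cat_rcons.
have [hpath huniq] : path (adj E) (inl x) (rcons s2 (inl y)) /\
                     uniq (inl x :: rcons s2 (inl y)).
  move: hp; case hPe: P => [//|h t] /and3P[_ hpt hu]; split.
    have ht : h :: t = s1 ++ inl x :: (rcons s2 (inl y) ++ s3) by rewrite -hPe eP.
    by have := path_suffix hpt ht; rewrite cat_path => /andP[].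
  by move: hu; rewrite -hPe eP cat_uniq => /and3P[_ _]; rewrite cat_uniq => /and3P[].
have inP z : z \in s2 -> z \in P by move=> zs; rewrite hP mem_cat inE mem_cat zs !orbT.
have hw2 : inr w \notin s2 by apply/negP => /inP; apply/negP.
have hsU2 : sorted <%O (Vvs s2).
  move: hsU; rewrite eP !Vvs_cat => /cat_sorted2 [_ /cat_sorted2 [+ _]].
  by rewrite /= Vvs_rcons cats0.
have hsV2 : sorted <%O (x :: rcons (Uvs s2) y).
  move: hsV; rewrite eP !Uvs_cat => /cat_sorted2 [_ /cat_sorted2 [+ _]].
  by rewrite /= Uvs_rcons cats1.
have ewx : (x, w) \in E by [].
have ewy : (y, w) \in E by [].
have [B0 [um hB]] : exists B0 um, s2 = rcons B0 (inr um).
  case: (seq_lastcase s2) => [e | [B0 [z e]]]; move: hpath; rewrite e //=.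
  rewrite rcons_path last_rcons => /andP[_]; case: z e => [//|um e _].
  by exists B0, um.
have [B1 [u1 hB']] : exists B1 u1, s2 = inr u1 :: B1.
  move: hpath; case: s2 {hP eP inP hw2 hsU2 hsV2 B0 um hB huniq} => [|z B1] //=.
  by case: z => [//|u1 _]; exists B1, u1.
have eum : (y, um) \in E by move: hpath; rewrite hB rcons_path last_rcons => /andP[].
have eu1 : (x, u1) \in E by move: hpath; rewrite hB' /= => /andP[].
have hmin : is_min (Vvs s2) u1 by rewrite hB' /=; apply: is_min_head; rewrite -/(Vvs _) -[_ :: _]/(Vvs (inr u1 :: B1)) -hB'.
have hmax : is_max (Vvs s2) um.
  have e : Vvs s2 = rcons (Vvs B0) um by rewrite hB Vvs_rcons cats1.
  by rewrite e; apply: is_max_last; rewrite -e.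
have nu1 : w != u1.
  apply/eqP => e; move/negP: hw2; apply; by rewrite hB' e mem_head.
have num : w != um.
  apply/eqP => e; move/negP: hw2; apply; by rewrite hB e mem_rcons mem_head.
case: (ltgtP w u1) => [wu1 | u1w | e]; last by rewrite e eqxx in nu1.
  apply: (case1V HP hpath huniq hw2 hsU2 hsV2 ewx ewy).
  case/andP: hmin => _ /allP h; apply/allP => u /h; exact: lt_le_trans.
case: (ltgtP w um) => [wum | umw | e]; last by rewrite e eqxx in num.
  case: B1 hB' => [|z B2] hB'.
    case/andP: hmax => + _; rewrite hB' /= inE => /eqP eu.
    by move: (lt_trans u1w wum); rewrite eu ltxx.
  have [v1 hz] : exists v1, z = inl v1.
    by move: hpath; rewrite hB' /= => /and3P[_ + _]; case: z {hB'} => [v1 _|//]; exists v1.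
  have e5 : (v1, u1) \in E by move: hpath; rewrite hB' hz /= => /and3P[].
  have v1in : v1 \in Uvs s2 by rewrite hB' hz /= mem_head.
  have h3 : x < v1.
    by apply: (allP (sorted_head hsV2)); rewrite mem_rcons inE v1in orbT.
  have h4 : v1 < y.
    by apply: (allP (sorted_last (hsV2 : sorted <%O (rcons (x :: Uvs s2) y)))); rewrite inE v1in orbT.
  exact: (case3V HP eu1 ewx ewy eum e5 u1w wum h3 (ltW h4)).
apply: (case2V HP hpath huniq hw2 hsU2 hsV2 ewx ewy hB hmin).
case/andP: hmax => _ /allP h; apply/allP => u /h ule; exact: le_lt_trans ule umw.
Qed.
End MainV.

Lemma is_path_rev (dU dV : Order.disp_t) (U : finOrderType dU)
  (V : finOrderType dV) (E : {set U * V}) (P : seq (U + V)) :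
  is_path E P -> is_path E (rev P).
Proof.
case: P => // h t /and3P[st pt ut].
case/lastP: t st pt ut => // t' l _ pt ut.
rewrite -rcons_cons rev_rcons; apply/and3P; split.
- by rewrite size_rev.
- have := rev_path (adj E) h (rcons t' l); rewrite last_rcons belast_rcons => ->.
  by rewrite (@eq_path _ _ (adj E)) // => a b; rewrite adjC.
- have -> : l :: rev (h :: t') = rev (h :: rcons t' l) by rewrite -rcons_cons rev_rcons.
  by rewrite rev_uniq.
Qed.

Local Close Scope order_scope.

Theorem corollary1 (dU dV : Order.disp_t) (U : finOrderType dU)
  (V : finOrderType dV) (E : {set U * V}) (P : seq (U + V)) (w : U + V) :
  PRBG E -> forward_path E P -> w \notin P ->
  count (adj E w) P <= 1.
Proof.
move=> HP /andP[hp hs] hw; rewrite leqNgt; apply/negP => hc.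
have main Q : is_path E Q -> sorted <%O (Uvs Q) -> sorted <%O (Vvs Q) ->
    w \notin Q -> 1 < count (adj E w) Q -> False.
  case: w {hw hc} => w' hQ hU hV hwQ hcQ.
    exact: (mainU HP hQ hU hV hwQ hcQ).
  exact: (mainV HP hQ hV hU hwQ hcQ).
case/orP: hs => /andP[hU hV]; first exact: (main P hp hU hV hw hc).
apply: (main (rev P)).
- exact: is_path_rev.
- by rewrite Uvs_rev rev_sorted.
- by rewrite Vvs_rev rev_sorted.
- by rewrite mem_rev.
- by rewrite count_rev.
Qed.
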